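(* Let $p\in(1,\infty)$ and $q\in[1,\infty]$. For every $k\in\mathbb N$ the unit vector basis of $\ell_q^k$ belongs to $\{X_p^{q,\omega}\}_k$.
   Context: Define $X^{q,0}_p=\mathbb R$ and inductively $X^{q,k}_p=\mathbb R\oplus_q\ell_p(X^{q,k-1}_p)$ (the $\ell_q$-direct sum of $\mathbb R$ with the $\ell_p$-sum of countably many copies of $X^{q,k-1}_p$), and $X^{q,\omega}_p=(\bigoplus_{k=0}^\infty X^{q,k}_p)_{\ell_p}$. For a Banach space $X$, $\{X\}_k$ is the set of norms $E$ on $\mathbb R^k$ for which the unit vector basis $(e_j)$ is normalized and monotone and such that: for every $\varepsilon>0$, for every closed finite-codimensional $X_1$ there is $x_1\in S_{X_1}$, ..., for every closed finite-codimensional $X_k$ there is $x_k\in S_{X_k}$, with $(x_j)_{j=1}^k$ $(1+\varepsilon)$-equivalent to $(e_j)_{j=1}^k$ ($C$-equivalent meaning $\frac1A\|\sum a_ix_i\|\le\|\sum a_ie_i\|\le B\|\sum a_ix_i\|$ with $AB\le C$). *)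

(* Defs.v *)
From mathcomp Require Import all_boot all_order all_algebra.
From mathcomp Require Import all_classical all_reals all_analysis.
Import Order.TTheory GRing.Theory Num.Theory.

Set Implicit Arguments.
Unset Strict Implicit.
Unset Printing Implicit Defensive.

Local Open Scope classical_set_scope.
Local Open Scope ring_scope.

(* q = +oo meaning the l_infty sum.                                          *)
(* A vector of X^{q,k}_p is represented as a tree-indexed family            *)
(* x : seq nat -> R : x [::] is the R-coordinate, and for every n, the      *)
(* function (fun s => x (n :: s)) is the n-th coordinate in                  *)
(* l_p(X^{q,k-1}_p).  Only nodes of depth <= k are used.                     *)
(* Norms are computed in \bar R (value +oo = vector not in the space).       *)

Section Spaces.
Context {R : realType}.
Local Open Scope ereal_scope.

Definition lq_pair (q : \bar R) (a b : \bar R) : \bar R :=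
  if q == +oo then maxe a b
  else ((a `^ fine q) + (b `^ fine q)) `^ (fine q)^-1.

Definition lp_seq (p : R) (a : nat -> \bar R) : \bar R :=
  (\sum_(n <oo) (a n `^ p)) `^ p^-1.

Fixpoint Xk_norm (p : R) (q : \bar R) (k : nat) (x : seq nat -> R) : \bar R :=
  match k with
  | 0 => (`| x [::] |)%:E
  | k'.+1 => lq_pair q (`| x [::] |)%:E
                       (lp_seq p (fun n => Xk_norm p q k' (fun s => x (n :: s))))
  end.

(* X^{q,omega}_p = (sum_k X^{q,k}_p)_{l_p}; a vector is x : nat -> seq nat -> R, *)
(* x k being the k-th component, an element of X^{q,k}_p.                    *)
Definition Xw_norm (p : R) (q : \bar R) (x : nat -> seq nat -> R) : \bar R :=
  lp_seq p (fun k => Xk_norm p q k (x k)).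

Definition Xw_space (p : R) (q : \bar R) : set (nat -> seq nat -> R) :=
  [set x | Xw_norm p q x < +oo /\ forall k s, (k < size s)%N -> x k s = 0%R].

End Spaces.

(* A normed space is given by a carrier S : set V inside a real vector space *)
(* V, and a norm nrm : V -> \bar R (finite on S).                             *)

Section Asymptotic.
Context {R : realType} {V : lmodType R}.
Variables (S : set V) (nrm : V -> \bar R).
Local Open Scope ereal_scope.

Definition closed_fincodim (Y : set V) : Prop :=
  [/\ Y `<=` S,
      Y 0%R,
      (forall (a : R) (x y : V), Y x -> Y y -> Y (a *: x + y)%R),
      (forall x, S x ->
         (forall e : R, (0 < e)%R -> exists2 y, Y y & nrm (x - y)%R < e%:E) ->
         Y x) &
      (exists (m : nat) (v : 'I_m -> V), (forall i, S (v i)) /\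
         forall x, S x -> exists (y : V) (c : 'I_m -> R),
           Y y /\ x = (y + \sum_(i < m) c i *: v i)%R)].

Definition equiv_basis (k : nat) (C : R) (E : ('I_k -> R) -> R)
    (x : 'I_k -> V) : Prop :=
  exists A B : R, [/\ (0 < A)%R, (0 < B)%R, (A * B <= C)%R &
    forall a : 'I_k -> R,
      (A^-1)%:E * nrm (\sum_(i < k) a i *: x i)%R <= (E a)%:E /\
      (E a)%:E <= B%:E * nrm (\sum_(i < k) a i *: x i)%R].

Fixpoint asym_game (k : nat) (C : R) (E : ('I_k -> R) -> R)
    (m : nat) (xs : seq V) : Prop :=
  match m with
  | 0 => equiv_basis C E (fun i : 'I_k => nth 0%R xs i)
  | m'.+1 => forall Y, closed_fincodim Y ->
             exists2 x, Y x & (nrm x = 1%E /\ asym_game C E m' (rcons xs x))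
  end.

End Asymptotic.

Section Norms.
Context {R : realType}.

Definition is_norm (k : nat) (E : ('I_k -> R) -> R) : Prop :=
  [/\ forall a, 0 <= E a,
      forall a, E a = 0 -> a = (fun=> 0),
      forall (c : R) a, E (fun i => c * a i) = `|c| * E a &
      forall a b, E (fun i => a i + b i) <= E a + E b].

Definition normalized_monotone (k : nat) (E : ('I_k -> R) -> R) : Prop :=
  (forall j : 'I_k, E (fun i => if i == j then 1 else 0) = 1) /\
  (forall (a : 'I_k -> R) (m : nat),
      E (fun i => if (i < m)%N then a i else 0) <= E a).

Definition in_asym_k {V : lmodType R} (S : set V) (nrm : V -> \bar R)
    (k : nat) (E : ('I_k -> R) -> R) : Prop :=
  [/\ is_norm E, normalized_monotone E &
      forall eps : R, 0 < eps -> asym_game S nrm (1 + eps) E k [::]].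

Definition lq_norm (q : \bar R) (k : nat) (a : 'I_k -> R) : R :=
  if q == +oo%E then \big[Num.max/0]_(i < k) `|a i|
  else (\sum_(i < k) `|a i| `^ fine q) `^ (fine q)^-1.

End Norms.

(* Main.v *)
Require Import Defs.
From mathcomp Require Import all_boot all_order all_algebra.
From mathcomp Require Import all_classical all_reals all_analysis.
From mathcomp Require Import ring lra.
Import Order.TTheory GRing.Theory Num.Theory.
Local Open Scope ring_scope.

Section PartA.
Context {R : realType}.
Implicit Types (x y c : R).

Definition lqr (q : \bar R) (x y : R) : R :=
  if q == +oo%E then Num.max x y
  else (x `^ fine q + y `^ fine q) `^ (fine q)^-1.

Lemma lq_pairE q x y : lq_pair q x%:E y%:E = (lqr q x y)%:E.
Proof.
rewrite /lq_pair /lqr; case: ifP => _; first by rewrite EFin_max.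
by rewrite !poweR_EFin.
Qed.

Lemma lqr_ge0 q x y : 0 <= x -> 0 <= y -> 0 <= lqr q x y.
Proof.
move=> x0 y0; rewrite /lqr; case: ifP => _; last exact: powR_ge0.
by rewrite le_max x0.
Qed.

Variable q : \bar R.
Hypothesis hq : (1%:E <= q)%E.

Let r := fine q.
Lemma r_ge1 : q != +oo%E -> 1 <= fine q.
Proof. by case: q hq => //= s; rewrite lee_fin. Qed.

Lemma lqr_homog c x y : 0 <= c -> 0 <= x -> 0 <= y ->
  lqr q (c * x) (c * y) = c * lqr q x y.
Proof.
move=> c0 x0 y0; rewrite /lqr; case: ifPn => qi; first by rewrite maxr_pMr.
have r1 := r_ge1 qi; have r0 : fine q != 0 by rewrite gt_eqF // (lt_le_trans _ r1).
rewrite !powRM // -mulrDr powRM ?powR_ge0 //; last by rewrite addr_ge0 // powR_ge0.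
by rewrite -powRrM mulfV // powRr1.
Qed.

Lemma lqr_x0 x : 0 <= x -> lqr q x 0 = x.
Proof.
move=> x0; rewrite /lqr; case: ifPn => qi; first by rewrite max_l.
have r1 := r_ge1 qi; have r0 : fine q != 0 by rewrite gt_eqF // (lt_le_trans _ r1).
by rewrite powR0 // addr0 -powRrM mulfV // powRr1.
Qed.

Fixpoint Nk (K : nat) (b : nat -> R) : R :=
  match K with
  | 0 => `|b 0%N|
  | K'.+1 => lqr q `|b 0%N| (Nk K' (fun j => b j.+1))
  end.

Lemma Nk_ge0 K b : 0 <= Nk K b.
Proof. elim: K b => [|K IH] b /=; [exact: normr_ge0 | exact: lqr_ge0]. Qed.

Lemma Nk_stable K b : (forall j, (K < j)%N -> b j = 0) -> Nk K.+1 b = Nk K b.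
Proof.
elim: K b => [|K IH] b hb.
  by rewrite /= (hb 1%N) // normr0 lqr_x0.
change (lqr q `|b 0%N| (Nk K.+1 (fun j => b j.+1)) = lqr q `|b 0%N| (Nk K (fun j => b j.+1))).
by rewrite IH // => j hj; apply: hb.
Qed.

Lemma Nk_ge k K b : (k <= K)%N -> (forall j, (k <= j)%N -> b j = 0) -> Nk K b = Nk k b.
Proof.
move=> /subnKC <-; elim: (K - k)%N => [|d IH] hb; first by rewrite addn0.
rewrite addnS Nk_stable ?IH // => j hj; apply: hb.
exact: leq_trans (leq_addr d k) (ltnW hj).
Qed.

End PartA.
Section PartB.
Context {R : realType}.

Lemma lp_seq_fin (p : R) (hp : 0 < p) (c : nat -> R) M X : 0 <= X ->
  (forall n, (M <= n)%N -> c n = 0) ->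
  lp_seq p (fun n => (`|c n| * X)%:E) =
  ((\sum_(n < M) `|c n| `^ p) `^ p^-1 * X)%:E.
Proof.
move=> X0 hc; rewrite /lp_seq.
have p0 : p != 0 by rewrite gt_eqF.
under eq_eseriesr do rewrite poweR_EFin.
rewrite (nneseries_split 0 M); last by move=> k _; rewrite lee_fin powR_ge0.
rewrite eseries0 ?adde0; last by move=> i hi _; rewrite hc // normr0 mul0r powR0.
rewrite sumEFin poweR_EFin add0n big_mkord; congr EFin.
under eq_bigr do rewrite powRM //.
rewrite -big_distrl /=.
have S0 : 0 <= \sum_(i < M) `|c i| `^ p by apply: sumr_ge0 => i _; exact: powR_ge0.
rewrite powRM ?powR_ge0 //.
by rewrite -powRrM mulfV // powRr1.
Qed.

End PartB.

Section PartC.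
Context {R : realType}.
Variables (p : R) (q : \bar R).
Hypothesis hp : 1 < p.
Hypothesis hq : (1%:E <= q)%E.

Definition normd (c : nat -> R) := exists M, (forall n, (M <= n)%N -> c n = 0) /\
  \sum_(n < M) `|c n| `^ p = 1.

Definition Pr (cs : nat -> nat -> R) (s : seq nat) : R :=
  \prod_(t < size s) cs t (nth 0%N s t).

Lemma Pr_nil cs : Pr cs [::] = 1.
Proof. by rewrite /Pr big_ord0. Qed.

Lemma Pr_cons cs n s : Pr cs (n :: s) = cs 0%N n * Pr (fun t => cs t.+1) s.
Proof. by rewrite /Pr /= big_ord_recl. Qed.

Lemma Xk_norm_S K x : Xk_norm p q K.+1 x =
  lq_pair q (`|x [::]|)%:E (lp_seq p (fun n => Xk_norm p q K (fun s => x (n :: s)))).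
Proof. by []. Qed.

Lemma lp_norm1 c X : normd c -> 0 <= X -> lp_seq p (fun n => (`|c n| * X)%:E) = X%:E.
Proof.
move=> [M [hM hs]] X0; rewrite (@lp_seq_fin _ p _ c M X) ?hs ?powR1 ?mul1r //.
exact: lt_trans hp.
Qed.

Lemma Xk_norm_F K : forall lam b cs, (forall t, normd (cs t)) ->
  Xk_norm p q K (fun s => b (size s) * (lam * Pr cs s)) = (`|lam| * Nk q K b)%:E.
Proof.
elim: K => [|K IH] lam b cs hcs.
  by rewrite /= Pr_nil mulr1 normrM mulrC.
rewrite Xk_norm_S.
have E1 : (fun n => Xk_norm p q K (fun s => b (size (n :: s)) * (lam * Pr cs (n :: s)))) =
   fun n => (`|cs 0%N n| * (`|lam| * Nk q K (fun j => b j.+1)))%:E.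
  apply/funext => n.
  have -> : (fun s => b (size (n :: s)) * (lam * Pr cs (n :: s))) =
     (fun s => (fun j => b j.+1) (size s) * ((lam * cs 0%N n) * Pr (fun t => cs t.+1) s)).
    by apply/funext => s; rewrite Pr_cons !mulrA.
  by rewrite (IH (lam * cs 0%N n) (fun j => b j.+1)) // normrM -mulrA mulrCA.
rewrite E1 lp_norm1 //; last by rewrite mulr_ge0 // Nk_ge0.
rewrite Pr_nil mulr1 lq_pairE normrM mulrC lqr_homog //; exact: Nk_ge0.
Qed.


Definition lam k (cs : nat -> nat -> R) K := if (k <= K)%N then cs 0%N (K - k)%N else 0.
Definition vec k (b : nat -> R) cs : nat -> seq nat -> R :=
  fun K s => b (size s) * (lam k cs K * Pr (fun t => cs t.+1) s).

Lemma normd_lam k cs : normd (cs 0%N) -> normd (lam k cs).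
Proof.
move=> [M [hM hs]]; exists (k + M)%N; split.
  move=> n hn; rewrite /lam; have hkn : (k <= n)%N by exact: leq_trans (leq_addr M k) hn.
  rewrite hkn hM // leq_subRL //.
rewrite big_split_ord /= big1 ?add0r => [|i _]; last first.
  by rewrite /lam leqNgt ltn_ord /= normr0 powR0 // gt_eqF // (lt_trans _ hp).
rewrite -hs; apply: eq_bigr => i _; by rewrite /lam /= leq_addr addKn.
Qed.

Lemma Xw_norm_vec k b cs : (forall t, normd (cs t)) -> (forall j, (k <= j)%N -> b j = 0) ->
  Xw_norm p q (vec k b cs) = (Nk q k b)%:E.
Proof.
move=> hcs hb; rewrite /Xw_norm.
have -> : (fun K => Xk_norm p q K (vec k b cs K)) = fun K => (`|lam k cs K| * Nk q k b)%:E.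
  apply/funext => K; rewrite /vec Xk_norm_F //; case: (leqP k K) => hK.
    by rewrite (@Nk_ge R q hq k K b hK hb).
  by rewrite /lam leqNgt hK /= normr0 !mul0r.
by rewrite lp_norm1 ?Nk_ge0 //; apply: normd_lam.
Qed.


End PartC.

Section PartD.
Context {R : realType}.

Lemma bigmax_recr K (G : nat -> R) : \big[Num.max/0]_(j < K.+1) G j =
  Num.max (\big[Num.max/0]_(j < K) G j) (G K).
Proof.
elim: K G => [|K IH] G; first by rewrite big_ord_recl !big_ord0 maxC.
have L : forall n (F : nat -> R), \big[Num.max/0]_(i < n) F (lift ord0 i) =
  \big[Num.max/0]_(i < n) F i.+1 by move=> n F; apply: eq_bigr => i _; rewrite lift0.
rewrite big_ord_recl [in RHS]big_ord_recl !L (IH (fun j => G j.+1)) maxA.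
by [].
Qed.

Lemma Nk_lq (q : \bar R) (hq : (1%:E <= q)%E) k (b : nat -> R) :
  (forall j, (k <= j)%N -> b j = 0) -> Nk q k b = lq_norm q (fun i : 'I_k => b i).
Proof.
move=> hb; rewrite /lq_norm; case: ifPn => qi.
  have E : forall K b, Nk q K b = \big[Num.max/0]_(j < K.+1) `|b j|.
    elim=> [|K IH] b'.
      by rewrite /= big_ord_recl big_ord0 max_l.
    rewrite [LHS]/= IH /lqr qi [RHS]big_ord_recl; apply: congr2 => //.
  rewrite E (bigmax_recr k (fun j => `|b j|)) /= hb // normr0 max_l //.
  exact: bigmax_ge_id.
have r1 : 1 <= fine q by case: q hq qi => //= s; rewrite lee_fin.
have r0 : fine q != 0 by rewrite gt_eqF // (lt_le_trans _ r1).
have E : forall K b, Nk q K b = (\sum_(j < K.+1) `|b j| `^ fine q) `^ (fine q)^-1.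
  elim=> [|K IH] b'.
    by rewrite /= big_ord_recl big_ord0 addr0 -powRrM mulfV // powRr1.
  rewrite [LHS]/= IH /lqr (negbTE qi) [in RHS]big_ord_recl -powRrM mulVf // powRr1; last first.
    by apply: sumr_ge0 => i _; exact: powR_ge0.
  by [].
by rewrite E big_ord_recr /= hb // normr0 powR0 // addr0.
Qed.

End PartD.
Section PartE.
Context {R : realType} {V : lmodType R}.

Lemma fincodim_ker (S : set V) (nrm : V -> \bar R) (Y : set V) :
  closed_fincodim S nrm Y ->
  exists M, forall u : 'I_M.+1 -> V, (forall j, S (u j)) ->
    exists g : 'I_M.+1 -> R, (exists j, g j != 0) /\
      forall c : R, Y (\sum_j (c * g j) *: u j).
Proof.
move=> [YS Y0 Ylin Ycl [m [v [Sv dec]]]]; exists m => u hu.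
have Yadd : forall x y, Y x -> Y y -> Y (x + y).
  by move=> x y hx hy; have := Ylin 1 x y hx hy; rewrite scale1r.
have Yscale : forall a x, Y x -> Y (a *: x).
  by move=> a x hx; have := Ylin a x 0 hx Y0; rewrite addr0.
have Ysum : forall (n : nat) (F : 'I_n -> V), (forall j, Y (F j)) -> Y (\sum_j F j).
  by move=> n F hF; apply: (big_ind Y Y0 Yadd) => j _; exact: hF.
have H : forall j, exists yc : V * ('I_m -> R),
    Y yc.1 /\ u j = yc.1 + \sum_(i < m) yc.2 i *: v i.
  move=> j; have [y [c [hy e]]] := dec (u j) (hu j).
  by exists (y, c).
have [f hf] := boolp.choice H.
pose A : 'M[R]_(m.+1, m) := \matrix_(j, i) (f j).2 i.
have hker : kermx A != 0.
  rewrite kermx_eq0 /row_free; apply/negP => /eqP h.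
  by have := rank_leq_col A; rewrite h ltnn.
have [i0 [j0 hij]] : exists i0 j0, kermx A i0 j0 != 0.
  case: (boolp.pselect (exists i0 j0, kermx A i0 j0 != 0)) => // hn.
  exfalso; move/negP: hker; apply; apply/eqP/matrixP => i j.
  rewrite [RHS]mxE; apply: boolp.contrapT => hne.
  by apply: hn; exists i, j; apply/eqP.
pose g := fun j => kermx A i0 j.
have hg : forall i, \sum_j g j * (f j).2 i = 0.
  move=> i; have := congr1 (fun M : 'M[R]_(m.+1, m) => M i0 i) (mulmx_ker A).
  rewrite [X in X = _]mxE [X in _ = X]mxE => e.
  by apply: etrans e; apply: eq_bigr => j _; rewrite [A j i]mxE.
exists g; split; first by exists j0.
move=> c.
have -> : \sum_j (c * g j) *: u j = \sum_j (c * g j) *: (f j).1.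
  under eq_bigr do rewrite (proj2 (hf _)) scalerDr.
  rewrite big_split /= -[RHS]addr0; congr (_ + _).
  under eq_bigr do rewrite scaler_sumr.
  rewrite exchange_big /= big1 // => i _.
  under eq_bigr do rewrite scalerA.
  by rewrite -scaler_suml; under eq_bigr do rewrite -mulrA; rewrite -mulr_sumr hg mulr0 scale0r.
by apply: Ysum => j; apply: Yscale; exact: (proj1 (hf j)).
Qed.

End PartE.
Section PartG.
Context {R : realType}.

Lemma convex_pow (r t x y : R) : 1 <= r -> 0 <= t -> t <= 1 -> 0 <= x -> 0 <= y ->
  (t * x + (1 - t) * y) `^ r <= t * x `^ r + (1 - t) * y `^ r.
Proof.
move=> r1 t0 t1 x0 y0.
have := @convex_powR R r r1 (Itv01 t0 t1) x y.
rewrite !inE /= !in_itv /= !andbT => /(_ x0 y0).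
rewrite !convRE /=. 
by [].
Qed.

Lemma powRV' (x r : R) : 0 < x -> (x^-1) `^ r = (x `^ r)^-1.
Proof.
move=> x0; have h : (x^-1) `^ r * x `^ r = 1.
  by rewrite -powRM ?invr_ge0 ?ltW // mulVf ?gt_eqF // powR1.
apply: (mulIf (x := x `^ r)); first by rewrite gt_eqF // powR_gt0.
by rewrite h mulVf // gt_eqF // powR_gt0.
Qed.

Lemma powR_Vr (S r : R) : 0 <= S -> 1 <= r -> (S `^ r^-1) `^ r = S.
Proof.
move=> S0 r1; have r0 : r != 0 by rewrite gt_eqF // (lt_le_trans _ r1).
by rewrite -powRrM mulVf // powRr1.
Qed.

Lemma sum_zero n (a : 'I_n -> R) r : 0 < r ->
  (\sum_i `|a i| `^ r) `^ r^-1 = 0 -> forall i, a i = 0.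
Proof.
move=> r0 /powR_eq0_eq0 h i.
have := @psumr_eq0P R _ xpredT (fun i => `|a i| `^ r) (fun i _ => powR_ge0 _ _) h i isT.
by move/powR_eq0_eq0/normr0_eq0.
Qed.

Lemma key_ineq (r A B x y : R) : 1 <= r -> 0 < A -> 0 < B -> 0 <= x -> 0 <= y ->
  (x + y) `^ r <= (A + B) `^ r * (A / (A + B) * (x `^ r / A `^ r) + B / (A + B) * (y `^ r / B `^ r)).
Proof.
move=> r1 Ap Bp x0 y0.
have Dp : 0 < A + B := addr_gt0 Ap Bp.
have t0 : 0 <= A / (A + B) := divr_ge0 (ltW Ap) (ltW Dp).
have t1 : A / (A + B) <= 1.
  rewrite (ler_pdivrMr _ _ Dp) mul1r lerDl; exact: ltW Bp.
have e1 : B / (A + B) = 1 - A / (A + B).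
  by field; rewrite gt_eqF.
have hw : x + y = (A + B) * (A / (A + B) * (x / A) + (1 - A / (A + B)) * (y / B)).
  rewrite -e1; field.
  by rewrite !gt_eqF.
have w0 : 0 <= A / (A + B) * (x / A) + (1 - A / (A + B)) * (y / B).
  rewrite -e1; apply: addr_ge0; apply: mulr_ge0.
  - exact: t0.
  - exact: divr_ge0 x0 (ltW Ap).
  - exact: divr_ge0 (ltW Bp) (ltW Dp).
  - exact: divr_ge0 y0 (ltW Bp).
rewrite hw powRM ?(ltW Dp) //; apply: ler_wpM2l; first exact: powR_ge0.
have hxA : (x / A) `^ r = x `^ r / A `^ r.
  by rewrite powRM ?invr_ge0 ?(ltW Ap) // powRV'.
have hyB : (y / B) `^ r = y `^ r / B `^ r.
  by rewrite powRM ?invr_ge0 ?(ltW Bp) // powRV'.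
rewrite -hxA -hyB e1.
exact: convex_pow r1 t0 t1 (divr_ge0 x0 (ltW Ap)) (divr_ge0 y0 (ltW Bp)).
Qed.


Lemma minkowski_fin (r : R) n (a b : 'I_n -> R) : 1 <= r ->
  (\sum_i `|a i + b i| `^ r) `^ r^-1 <=
  (\sum_i `|a i| `^ r) `^ r^-1 + (\sum_i `|b i| `^ r) `^ r^-1.
Proof.
move=> r1; have r0 : 0 < r := lt_le_trans ltr01 r1.
have [A0|A0] := eqVneq ((\sum_i `|a i| `^ r) `^ r^-1) 0.
  have ha := @sum_zero n a r r0 A0.
  rewrite A0 add0r; suff -> : \sum_i `|a i + b i| `^ r = \sum_i `|b i| `^ r by [].
  by apply: eq_bigr => i _; rewrite ha add0r.
have [B0|B0] := eqVneq ((\sum_i `|b i| `^ r) `^ r^-1) 0.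
  have hb := @sum_zero n b r r0 B0.
  rewrite B0 addr0; suff -> : \sum_i `|a i + b i| `^ r = \sum_i `|a i| `^ r by [].
  by apply: eq_bigr => i _; rewrite hb addr0.
have [SA eSA] : exists SA, SA = \sum_i `|a i| `^ r by eexists.
have [SB eSB] : exists SB, SB = \sum_i `|b i| `^ r by eexists.
have SA0 : 0 <= SA by rewrite eSA; apply: sumr_ge0 => i _; exact: powR_ge0.
have SB0 : 0 <= SB by rewrite eSB; apply: sumr_ge0 => i _; exact: powR_ge0.
rewrite -eSA -eSB in A0 B0 *.
have [A eA] : exists A, A = SA `^ r^-1 by eexists.
have [B eB] : exists B, B = SB `^ r^-1 by eexists.
rewrite -eA -eB in A0 B0 *.
have Ap : 0 < A by rewrite lt0r A0 eA powR_ge0.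
have Bp : 0 < B by rewrite lt0r B0 eB powR_ge0.
have hA : A `^ r = SA by rewrite eA powR_Vr.
have hB : B `^ r = SB by rewrite eB powR_Vr.
have Dp : 0 < A + B := addr_gt0 Ap Bp.
have H : \sum_i `|a i + b i| `^ r <= (A + B) `^ r.
  apply: (le_trans (y := \sum_i (A + B) `^ r * (A / (A + B) * (`|a i| `^ r / A `^ r)
                                + B / (A + B) * (`|b i| `^ r / B `^ r)))).
    apply: ler_sum => i _; apply: le_trans; last exact: (@key_ineq r A B `|a i| `|b i| r1 Ap Bp (normr_ge0 (a i)) (normr_ge0 (b i))).
    apply: ge0_ler_powR; first exact: ltW.
    - by rewrite nnegrE.
    - by rewrite nnegrE addr_ge0.
    - exact: ler_normD.
  rewrite -mulr_sumr big_split /= -!mulr_sumr -!mulr_suml hA hB -eSA -eSB.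
  rewrite mulfV; last by rewrite -hA gt_eqF // powR_gt0.
  rewrite mulfV; last by rewrite -hB gt_eqF // powR_gt0.
  have DnZ : A + B != 0 := lt0r_neq0 Dp.
  by rewrite !mulr1 -mulrDl divff // mulr1.
rewrite -[X in _ <= X](@powR_Vr (A + B) r) ?(ltW Dp) //.
rewrite powRAC; apply: ge0_ler_powR.
- by rewrite invr_ge0 ltW.
- by rewrite nnegrE; apply: sumr_ge0 => i _; exact: powR_ge0.
- by rewrite nnegrE powR_ge0.
- exact: H.
Qed.


Lemma lq_is_norm (q : \bar R) (hq : (1%:E <= q)%E) k : is_norm (lq_norm q (k := k)).
Proof.
rewrite /is_norm /lq_norm; have [qi|qi] := boolP (q == +oo%E); rewrite ?(negbTE qi) ?qi.
  split.
  - by move=> a; exact: bigmax_ge_id.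
  - move=> a h; apply/funext => i; apply/eqP; rewrite -normr_le0 -h.
    exact: (le_bigmax 0 (fun i => `|a i|) i).
  - move=> c a.
    rewrite (big_morph (fun x => `|c| * x) (fun y z => @maxr_pMr _ `|c| y z (normr_ge0 c)) (mulr0 _)).
    by apply: eq_bigr => i _; rewrite normrM.
  - move=> a b; apply: bigmax_le => [|i _].
      by apply: addr_ge0; exact: bigmax_ge_id.
    apply: le_trans (ler_normD _ _) _; apply: lerD.
      exact: (le_bigmax 0 (fun i => `|a i|) i).
    exact: (le_bigmax 0 (fun i => `|b i|) i).
have r1 : 1 <= fine q by case: q hq qi => //= s; rewrite lee_fin.
have r0 : 0 < fine q := lt_le_trans ltr01 r1.
split.
- by move=> a; exact: powR_ge0.
- by move=> a h; apply/funext => i; exact: (@sum_zero k a (fine q) r0 h i).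
- move=> c a.
  have -> : \sum_i `|c * a i| `^ fine q = `|c| `^ fine q * \sum_i `|a i| `^ fine q.
    by rewrite mulr_sumr; apply: eq_bigr => i _; rewrite normrM powRM.
  rewrite powRM ?powR_ge0 //; last by apply: sumr_ge0 => i _; exact: powR_ge0.
  by rewrite -powRrM mulfV ?powRr1 // gt_eqF.
- move=> a b; exact: minkowski_fin.
Qed.

Lemma lq_unit (q : \bar R) (hq : (1%:E <= q)%E) k (j0 : 'I_k) (F : 'I_k -> R) :
  (forall i, `|F i| = if i == j0 then 1 else 0) -> lq_norm q F = 1.
Proof.
move=> hF; rewrite /lq_norm; have [qi|qi] := boolP (q == +oo%E); rewrite ?(negbTE qi) ?qi.
  apply/le_anti/andP; split.
    apply: bigmax_le => [|i _]; first exact: ler01.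
    by rewrite hF; case: (i == j0) => //; exact: ler01.
  have := le_bigmax 0 (fun i => `|F i|) j0; by rewrite hF eqxx.
have r1 : 1 <= fine q by case: q hq qi => //= s; rewrite lee_fin.
have r0 : 0 < fine q := lt_le_trans ltr01 r1.
rewrite (bigD1 j0) //= hF eqxx powR1 big1 ?addr0 ?powR1 // => i /negbTE hi.
by rewrite hF hi powR0 // gt_eqF.
Qed.

Lemma lq_nm (q : \bar R) (hq : (1%:E <= q)%E) k : normalized_monotone (lq_norm q (k := k)).
Proof.
split.
  move=> j; apply: (@lq_unit q hq k j) => i.
  by case: (i == j); rewrite ?normr1 ?normr0.
move=> a m; rewrite /lq_norm; have [qi|qi] := boolP (q == +oo%E); rewrite ?(negbTE qi) ?qi.
  apply: bigmax_le => [|i _]; first exact: bigmax_ge_id.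
  apply: le_trans (le_bigmax 0 (fun i => `|a i|) i).
  by case: ifP => _; rewrite ?normr0 ?normr_ge0.
have r1 : 1 <= fine q by case: q hq qi => //= s; rewrite lee_fin.
have r0 : 0 < fine q := lt_le_trans ltr01 r1.
apply: ge0_ler_powR.
- by rewrite invr_ge0 ltW.
- by rewrite nnegrE; apply: sumr_ge0 => i _; exact: powR_ge0.
- by rewrite nnegrE; apply: sumr_ge0 => i _; exact: powR_ge0.
apply: ler_sum => i _; case: ifP => _ //.
by rewrite normr0 powR0 ?gt_eqF // powR_ge0.
Qed.

End PartG.
Section PartF.
Context {R : realType}.

Lemma sum_app2 n (c : 'I_n -> R) (f : 'I_n -> nat -> seq nat -> R) K s :
  (\sum_j c j *: f j) K s = \sum_j c j * f j K s.
Proof. by rewrite !fct_sumE. Qed.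

Definition dl (i : nat) : nat -> R := fun j => (j == i)%:R.
Definition upd (cs : nat -> nat -> R) (i : nat) (h : nat -> R) : nat -> nat -> R :=
  fun t => if t == i then h else cs t.

Lemma sum_dl n (G : 'I_n -> R) (i : 'I_n) : \sum_(j < n) G j * dl j i = G i.
Proof.
rewrite (bigD1 i) //= /dl eqxx mulr1 big1 ?addr0 // => j hj.
suff -> : (nat_of_ord i == nat_of_ord j) = false by rewrite mulr0.
by apply/negbTE; rewrite eq_sym.
Qed.

Lemma sum_dl_out n (G : 'I_n -> R) (m : nat) : (n <= m)%N -> \sum_(j < n) G j * dl j m = 0.
Proof.
move=> hm; rewrite big1 // => j _; rewrite /dl.
suff -> : (m == nat_of_ord j) = false by rewrite mulr0.
by apply/negbTE; rewrite neq_ltn (leq_trans (ltn_ord j) hm) orbT.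
Qed.

Variables (p : R) (q : \bar R) (k : nat).
Hypothesis hp : 1 < p.
Hypothesis hq : (1%:E <= q)%E.

Lemma vec_in_S b cs : (forall t, normd p (cs t)) -> (forall j, (k <= j)%N -> b j = 0) ->
  Xw_space p q (vec k b cs).
Proof.
move=> hcs hb; split.
  by rewrite (Xw_norm_vec p q hp hq k b cs hcs hb) ltry.
move=> K s hKs; rewrite /vec /lam; case: leqP => hk.
  by rewrite hb ?mul0r //; exact: leq_trans hk (ltnW hKs).
by rewrite mul0r mulr0.
Qed.

Lemma vec_upd_lt i j h cs : (i < j)%N -> vec k (dl i) (upd cs j h) = vec k (dl i) cs.
Proof.
move=> hij; apply/funext => K; apply/funext => s; rewrite /vec /dl /=.
have [hs|hs] := eqVneq (size s) i; last by rewrite !mul0r.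
congr (_ * (_ * _)).
  rewrite /lam /upd; case: (k <= K)%N => //.
  suff -> : (0 == j)%N = false by [].
  by apply/negbTE; rewrite eq_sym -lt0n (leq_ltn_trans (leq0n i) hij).
rewrite /Pr; apply: eq_bigr => t _; rewrite /upd.
suff -> : (t.+1 == j)%N = false by [].
apply: ltn_eqF; apply: leq_trans hij; rewrite -hs; exact: ltn_ord.
Qed.

Lemma vec_lin i cs K s : exists W idx, forall h, vec k (dl i) (upd cs i h) K s = W * h idx.
Proof.
rewrite /vec /dl /=.
have [hs|hs] := eqVneq (size s) i; last first.
  by exists 0, 0%N => h; rewrite !mul0r.
case: i hs => [|i] hs.
  case: s hs => // _; rewrite /lam /upd /=.
  case: (k <= K)%N; last by exists 0, 0%N => h; rewrite !mul0r mulr0.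
  by exists true%:R, (K - k)%N => h; rewrite Pr_nil mulr1.
exists (true%:R * (lam k cs K * \prod_(t < i) cs t.+1 (nth 0%N s t))), (nth 0%N s i) => h.
have -> : lam k (upd cs i.+1 h) K = lam k cs K by rewrite /lam /upd.
rewrite -!mulrA; congr (_ * (_ * _)).
rewrite /Pr hs big_ord_recr /= /upd eqxx; congr (_ * _).
apply: eq_bigr => t _ /=.
suff -> : (t.+1 == i.+1)%N = false by [].
by rewrite eqSS; apply: ltn_eqF.
Qed.

Lemma vec_sum i cs M (c : 'I_M -> R) :
  \sum_(jj < M) c jj *: vec k (dl i) (upd cs i (dl jj)) =
  vec k (dl i) (upd cs i (fun n => \sum_(jj < M) c jj * dl jj n)).
Proof.
apply/funext => K; apply/funext => s; rewrite sum_app2.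
have [W [idx hW]] := vec_lin i cs K s.
rewrite hW; under eq_bigr do rewrite hW.
by rewrite mulr_sumr; apply: eq_bigr => jj _; rewrite mulrCA.
Qed.

Lemma normd_dl jj : normd p (dl jj).
Proof.
exists jj.+1; split.
  move=> n hn; rewrite /dl.
  suff -> : (n == jj) = false by [].
  by apply/negbTE; rewrite neq_ltn hn orbT.
rewrite big_ord_recr /= big1 => [|n _].
  by rewrite /dl eqxx normr1 powR1 add0r.
rewrite /dl.
suff -> : (nat_of_ord n == jj) = false by rewrite normr0 powR0 // gt_eqF // (lt_trans ltr01 hp).
exact: ltn_eqF (ltn_ord n).
Qed.

Lemma normd_upd cs i h : (forall t, normd p (cs t)) -> normd p h -> forall t, normd p (upd cs i h t).
Proof. by move=> hcs hh t; rewrite /upd; case: (t == i). Qed.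

Lemma normd_comb M (g : 'I_M.+1 -> R) (j0 : 'I_M.+1) : g j0 != 0 ->
  normd p (fun n => \sum_(jj < M.+1) ((\sum_jj `|g jj| `^ p) `^ (- p^-1) * g jj) * dl jj n).
Proof.
move=> hj0.
have p0 : 0 < p := lt_trans ltr01 hp.
have [S eS] : exists S, S = \sum_jj `|g jj| `^ p by eexists.
rewrite -eS.
have Sp : 0 < S.
  have h0 : 0 < `|g j0| `^ p by apply: powR_gt0; rewrite normr_gt0.
  rewrite eS (bigD1 j0) //=; apply: (lt_le_trans h0); rewrite lerDl.
  by apply: sumr_ge0 => i _; exact: powR_ge0.
have [c ec] : exists c, c = S `^ (- p^-1) by eexists.
rewrite -ec.
have c0 : 0 <= c by rewrite ec powR_ge0.
exists M.+1; split.
  by move=> n hn; apply: sum_dl_out.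
have -> : \sum_(n < M.+1) `|\sum_(jj < M.+1) (c * g jj) * dl jj n| `^ p =
          \sum_(n < M.+1) `|c * g n| `^ p.
  by apply: eq_bigr => n _; rewrite (@sum_dl M.+1 (fun jj => c * g jj) n).
have -> : \sum_(n < M.+1) `|c * g n| `^ p = c `^ p * S.
  rewrite eS mulr_sumr; apply: eq_bigr => n _.
  by rewrite normrM (ger0_norm c0) powRM.
rewrite ec -powRrM mulNr mulVf ?gt_eqF // powR_inv1 ?(ltW Sp) //.
exact: mulVf (lt0r_neq0 Sp).
Qed.

Definition ba (a : 'I_k -> R) : nat -> R := fun j => \sum_(i < k) a i * dl i j.

Lemma game_inv (eps : R) (heps : 0 < eps) n : forall j cs (xs : seq (nat -> seq nat -> R)), (j + n = k)%N ->
  (forall t, normd p (cs t)) -> size xs = j ->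
  (forall i, (i < j)%N -> nth 0 xs i = vec k (dl i) cs) ->
  asym_game (Xw_space p q) (Xw_norm p q) (1 + eps) (lq_norm q (k := k)) n xs.
Proof.
elim: n => [|n IH] j cs xs hjn hcs hsz hxs.
  rewrite addn0 in hjn; rewrite hjn in hsz hxs.
  exists 1, 1; split; [exact: ltr01 | exact: ltr01 | |].
    by rewrite mul1r lerDl ltW.
  move=> a.
  have -> : \sum_(i < k) a i *: nth 0 xs i = vec k (ba a) cs.
    transitivity (\sum_(i < k) a i *: vec k (dl i) cs).
      by apply: eq_bigr => i _; rewrite hxs // hsz.
    apply/funext => K; apply/funext => s; rewrite sum_app2 /vec /ba mulr_suml.
    by apply: eq_bigr => i _; rewrite mulrA.
  have hb : forall l, (k <= l)%N -> ba a l = 0 by move=> l hl; exact: sum_dl_out.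
  rewrite (Xw_norm_vec p q hp hq k (ba a) cs hcs hb).
  rewrite (Nk_lq q hq k (ba a) hb).
  have -> : (fun i : 'I_k => ba a i) = a.
    by apply/funext => i; rewrite /ba sum_dl.
  by rewrite invr1 !mul1e; split.
move=> Y hY.
have jk : (j < k)%N by rewrite -hjn addnS ltnS leq_addr.
have [M hM] := fincodim_ker _ _ _ hY.
have hdlj : forall l, (k <= l)%N -> dl j l = 0.
  move=> l hl; rewrite /dl.
  suff -> : (l == j) = false by [].
  by apply/negbTE; rewrite neq_ltn (leq_trans jk hl) orbT.
have hu : forall jj : 'I_M.+1, Xw_space p q (vec k (dl j) (upd cs j (dl jj))).
  move=> jj; apply: vec_in_S => //; apply: normd_upd => //; exact: normd_dl.
have [g [[j0 hj0] hg]] := hM _ hu.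
have hn := @normd_comb M g j0 hj0.
set c := (\sum_jj `|g jj| `^ p) `^ (- p^-1) in hn.
set hfun := (fun n => _) in hn.
have Yx : Y (vec k (dl j) (upd cs j hfun)) by rewrite /hfun -vec_sum; exact: hg c.
exists (vec k (dl j) (upd cs j hfun)) => //; split.
  have hcs' := @normd_upd cs j hfun hcs hn.
  rewrite (Xw_norm_vec p q hp hq k (dl j) _ hcs' hdlj) (Nk_lq q hq k (dl j) hdlj).
  rewrite (@lq_unit _ q hq k (Ordinal jk)) // => i.
  have -> : (i == Ordinal jk) = (nat_of_ord i == j) by [].
  by rewrite /dl; case: (nat_of_ord i == j); rewrite ?normr1 ?normr0.
apply: (IH j.+1 (upd cs j hfun)); first by rewrite addSnnS.
- exact: (@normd_upd cs j hfun hcs hn).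
- by rewrite size_rcons hsz.
move=> i hi; rewrite nth_rcons hsz.
case: ltngtP => hij.
- by rewrite hxs // vec_upd_lt.
- by move: hi; rewrite ltnS leqNgt hij.
- by rewrite hij.
Qed.

End PartF.

Theorem corollary5p6 (R : realType) (p : R) (q : \bar R)
    (hp : 1 < p) (hq : (1%:E <= q)%E) (k : nat) :
  in_asym_k (Xw_space p q) (Xw_norm p q) (lq_norm q (k := k)).
Proof.
split; [exact: lq_is_norm | exact: lq_nm |].
move=> eps heps.
apply: (@game_inv R p q k hp hq eps heps k 0%N (fun _ => dl 0) [::]) => //.
by move=> t; exact: normd_dl.
Qed.
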